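(* For every natural number $n\geq 2$, the $n$-Split Interval $S_n(I)$ contains no subspace homeomorphic to $D_n(2^{\mathbb{N}})$, and $D_n(2^{\mathbb{N}})$ contains no subspace homeomorphic to $S_n(I)$.
   Context: Let $I=[0,1]$. For $n\geq 2$, $S_n(I)$ is the set $I\times\{0,\ldots,n-1\}$ with the topology in which the points $(x,i)$ with $i\in\{2,\ldots,n-1\}$ are isolated, a point $(x,0)$ with $x>0$ has basic neighbourhoods $\{(x,0)\}\cup\{(y,i): z_0<y<x,\ i\in\{0,\ldots,n-1\}\}$ for $z_0\in I$, $z_0<x$, a point $(x,1)$ with $x<1$ has basic neighbourhoods $\{(x,1)\}\cup\{(y,i): x<y<z_1,\ i\in\{0,\ldots,n-1\}\}$ for $z_1\in I$, $z_1>x$, and the points $(0,0)$ and $(1,1)$ are isolated. For $n\geq 2$ and a Hausdorff space $X$, the Alexandroff $n$-plicate $D_n(X)$ is the set $X\times\{0,\ldots,n-1\}$ with the topology in which the points $(x,i)$ with $i\in\{1,\ldots,n-1\}$ are isolated and a point $(x,0)$ has basic neighbourhoods $\mathscr{U}\times\{0,\ldots,n-1\}\setminus\{(x,i):1\leq i\leq n-1\}$, where $\mathscr{U}$ ranges over neighbourhoods of $x$ in $X$. $2^{\mathbb{N}}$ is the Cantor space. *)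

(* Defs.v *)
From HB Require Import structures.
From mathcomp Require Import all_boot all_order all_algebra.
From mathcomp Require Import boolp classical_sets reals.
Set Implicit Arguments. Unset Strict Implicit. Unset Printing Implicit Defensive.
Import Order.TTheory GRing.Theory Num.Theory.
Local Open Scope classical_set_scope.
Local Open Scope ring_scope.

Definition open_of {T : Type} (B : T -> set (set T)) (U : set T) : Prop :=
  forall x, U x -> exists N, B x N /\ N `<=` U.

Definition embedding {X Y : Type} (BX : X -> set (set X)) (BY : Y -> set (set Y))
  (f : X -> Y) : Prop :=
  injective f /\
  forall U : set X, open_of BX U <-> exists V, open_of BY V /\ U = f @^-1` V.

Definition unitI (R : realType) := {x : R | (0 <= x <= 1)%R}.

Definition Sn_base (R : realType) (n : nat) (p : unitI R * 'I_n)
  : set (set (unitI R * 'I_n)) :=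
  fun N =>
    let x := sval p.1 in let i := nat_of_ord p.2 in
    if (2 <= i)%N then N = [set p]
    else if i == 0%N then
      (if x == 0 then N = [set p]
       else exists z0 : unitI R, sval z0 < x /\
              N = [set p] `|` [set q | sval z0 < sval q.1 < x])
    else
      (if x == 1 then N = [set p]
       else exists z1 : unitI R, x < sval z1 /\
              N = [set p] `|` [set q | x < sval q.1 < sval z1]).

Definition cantor_base (x : nat -> bool) : set (set (nat -> bool)) :=
  fun N => exists k : nat, N = [set y | forall i, (i < k)%N -> y i = x i].

Definition Dn_base {X : Type} (BX : X -> set (set X)) (n : nat) (p : X * 'I_n)
  : set (set (X * 'I_n)) :=
  fun N =>
    if nat_of_ord p.2 == 0%N then
      exists U, BX p.1 U /\
        N = [set q | U q.1 /\ ~ (q.1 = p.1 /\ nat_of_ord q.2 <> 0%N)]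
    else N = [set p].

(* Main.v *)
Require Import Defs.
From HB Require Import structures.
From mathcomp Require Import all_boot all_order all_algebra.
From mathcomp Require Import boolp classical_sets reals.
From mathcomp Require Import cardinality set_interval ereal measure lebesgue_measure.
Set Implicit Arguments. Unset Strict Implicit. Unset Printing Implicit Defensive.
Import Order.TTheory GRing.Theory Num.Theory.
Local Open Scope classical_set_scope.
Local Open Scope ring_scope.

Section S.
Variables (R : realType) (n : nat).
Implicit Types (p q : unitI R * 'I_n).

Lemma Sn_base_mem p N : Sn_base p N -> N p.
Proof.
rewrite /Sn_base.
case: ifP => _; first by move=> ->.
case: ifP => _; case: ifP => _; try by move=> ->.
all: by move=> [z [_ ->]]; left.
Qed.

Lemma Sn_base_key p N q : Sn_base p N -> N q ->
  q = p \/ (nat_of_ord p.2 = 0%N /\ sval q.1 < sval p.1)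
        \/ (nat_of_ord p.2 = 1%N /\ sval p.1 < sval q.1).
Proof.
rewrite /Sn_base.
case: ifP => h2; first by move=> -> ->; left.
case: ifP => h0; case: ifP => _; try by move=> -> ->; left.
- move=> [z [_ ->]] [->|/= /andP[_ h]]; first by left.
  by right; left; split => //; apply/eqP.
- move=> [z [_ ->]] [->|/= /andP[h _]]; first by left.
  right; right; split => //.
  by move: h2 h0; case: (nat_of_ord p.2) => [|[|m]].
Qed.

Lemma L2 q : (2 <= q.2)%N -> Sn_base q [set q].
Proof. by move=> h; rewrite /Sn_base /= h. Qed.

Lemma L0 q (z : unitI R) : nat_of_ord q.2 = 0%N -> sval z < sval q.1 ->
  Sn_base q ([set q] `|` [set r | sval z < sval r.1 < sval q.1]).
Proof.
move=> h hz; rewrite /Sn_base /= h /=.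
have -> : (sval q.1 == 0) = false.
  apply/negbTE; rewrite gt_eqF //; apply: le_lt_trans hz.
  by case: z => z /= /andP[].
by exists z.
Qed.

Lemma L1 q (z : unitI R) : nat_of_ord q.2 = 1%N -> sval q.1 < sval z ->
  Sn_base q ([set q] `|` [set r | sval q.1 < sval r.1 < sval z]).
Proof.
move=> h hz; rewrite /Sn_base /= h /=.
have -> : (sval q.1 == 1) = false.
  have hz1 : sval z <= 1 by case: z {hz} => z /= /andP[].
  by apply/negbTE; rewrite lt_eqF // (lt_le_trans hz hz1).
by exists z.
Qed.

Lemma Sn_open p N : Sn_base p N -> open_of (@Sn_base R n) N.
Proof.
move=> hb q Nq.
have [->|qp] := pselect (q = p); first by exists N; split.
have hlev : (2 <= q.2)%N \/ nat_of_ord q.2 = 0%N \/ nat_of_ord q.2 = 1%N.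
  by case: (nat_of_ord q.2) => [|[|m]]; auto.
move: hb; rewrite /Sn_base /=.
case: ifP => h2; first by move=> hN; exfalso; apply: qp; move: Nq; rewrite hN; exact.
case: ifP => h0; case: ifP => hx; try by move=> hN; exfalso; apply: qp; move: Nq; rewrite hN; exact.
- move=> [z [hz hN]]; move: Nq; rewrite hN => -[//|/= /andP[zq qp1]].
  case: hlev => [q2|[q0|q1]].
  + exists [set q]; split; first exact: L2.
    by move=> r ->; right; rewrite /= zq qp1.
  + exists ([set q] `|` [set r | sval z < sval r.1 < sval q.1]); split; first exact: L0.
    move=> r [->|/= /andP[a b]]; right; first by rewrite /= zq qp1.
    by rewrite /= a (lt_trans b qp1).
  + exists ([set q] `|` [set r | sval q.1 < sval r.1 < sval p.1]); split; first exact: L1.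
    move=> r [->|/= /andP[a b]]; right; first by rewrite /= zq qp1.
    by rewrite /= b (lt_trans zq a).
- move=> [z [hz hN]]; move: Nq; rewrite hN => -[//|/= /andP[zq qp1]].
  case: hlev => [q2|[q0|q1]].
  + exists [set q]; split; first exact: L2.
    by move=> r ->; right; rewrite /= zq qp1.
  + exists ([set q] `|` [set r | sval p.1 < sval r.1 < sval q.1]); split; first exact: L0.
    move=> r [->|/= /andP[a b]]; right; first by rewrite /= zq qp1.
    by rewrite /= a (lt_trans b qp1).
  + exists ([set q] `|` [set r | sval q.1 < sval r.1 < sval z]); split; first exact: L1.
    move=> r [->|/= /andP[a b]]; right; first by rewrite /= zq qp1.
    by rewrite /= b (lt_trans zq a).
Qed.

Lemma Sn_exists p : exists N, Sn_base p N.
Proof.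
have hp : 0 <= sval p.1 <= 1 by case: p.1.
case/andP: hp => hp0 hp1.
case h2: (2 <= p.2)%N; first by exists [set p]; rewrite /Sn_base /= h2.
case h0: (nat_of_ord p.2 == 0%N); case hx0: (sval p.1 == 0); case hx1: (sval p.1 == 1);
  try by exists [set p]; rewrite /Sn_base /= h2 h0 ?hx0 ?hx1.
- pose z0 : unitI R := exist _ 0 (introT andP (conj (lexx (0:R)) (@ler01 R))).
  exists ([set p] `|` [set q | sval z0 < sval q.1 < sval p.1]); rewrite /Sn_base /= h2 h0 hx0.
  exists z0; split => //.
  by rewrite /= lt_neqAle eq_sym hx0 hp0.
- pose z0 : unitI R := exist _ 0 (introT andP (conj (lexx (0:R)) (@ler01 R))).
  exists ([set p] `|` [set q | sval z0 < sval q.1 < sval p.1]); rewrite /Sn_base /= h2 h0 hx0.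
  exists z0; split => //.
  by rewrite /= lt_neqAle eq_sym hx0 hp0.
- pose z1 : unitI R := exist _ 1 (introT andP (conj (@ler01 R) (lexx (1:R)))).
  exists ([set p] `|` [set q | sval p.1 < sval q.1 < sval z1]); rewrite /Sn_base /= h2 h0 hx1.
  exists z1; split => //.
  by rewrite /= lt_neqAle hx1 hp1.
- pose z1 : unitI R := exist _ 1 (introT andP (conj (@ler01 R) (lexx (1:R)))).
  exists ([set p] `|` [set q | sval p.1 < sval q.1 < sval z1]); rewrite /Sn_base /= h2 h0 hx1.
  exists z1; split => //.
  by rewrite /= lt_neqAle hx1 hp1.
Qed.
End S.

Lemma cantor_diag (T : countType) (h : (nat -> bool) -> T) : injective h -> False.
Proof.
move=> hinj.
have [g hg] : {g : nat -> (nat -> bool) & forall m x, pickle (h x) = m -> g m = x}.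
  apply: (@choice nat (nat -> bool) (fun m y => forall x, pickle (h x) = m -> y = x)).
  move=> m; case: (pselect (exists x, pickle (h x) = m)) => [[x hx]|hn].
    exists x => x' hx'; apply: hinj; apply: (pcan_inj (@pickleK T)).
    by rewrite hx hx'.
  by exists (fun _ => false) => x hx; exfalso; apply: hn; exists x.
pose d := fun i => ~~ g i i.
have := hg _ d erefl.
set m := pickle (h d) => /(congr1 (fun F => F m)).
by rewrite /d; case: (g m m).
Qed.

Lemma part1 (R : realType) (n : nat) (o : 'I_n) (ho : nat_of_ord o = 0%N)
  (f : (nat -> bool) * 'I_n -> unitI R * 'I_n) :
  embedding (Dn_base cantor_base (n:=n)) (@Sn_base R n) f -> False.
Proof.
move=> [finj femb].
have hs : forall x : nat -> bool, exists c : nat * seq bool * nat,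
   c.2 = nat_of_ord (f (x, o)).2 /\ c.1.2 = mkseq x c.1.1 /\
   exists N, Sn_base (f (x, o)) N /\
     forall y, (forall i, (i < c.1.1)%N -> y i = x i) -> N (f (y, o)).
  move=> x.
  have [N hN] := Sn_exists (f (x, o)).
  have hop : open_of (Dn_base cantor_base (n:=n)) (f @^-1` N).
    by apply/femb; exists N; split => //; exact: Sn_open hN.
  have [M [hM MN]] := hop (x, o) (Sn_base_mem hN).
  move: hM; rewrite /Dn_base /= ho eqxx => -[U [[k hU] hMe]]; subst U M.
  exists (k, mkseq x k, nat_of_ord (f (x, o)).2); split => //; split => //.
  exists N; split => // y hy; apply: MN => /=; split => //.
  by rewrite ho => -[].
have [c hc] := choice hs.
apply: (@cantor_diag _ c) => x x' hxx'.
have [l1 [s1 [N1 [hN1 h1]]]] := hc x.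
have [l2 [s2 [N2 [hN2 h2]]]] := hc x'.
have agree : forall i, (i < (c x).1.1)%N -> x' i = x i.
  move=> i hi.
  have := congr1 (fun s => nth false s i) (etrans (esym s1) (etrans (congr1 (fun c => c.1.2) hxx') s2)).
  by rewrite /= !nth_mkseq // -hxx'.
have agree' : forall i, (i < (c x').1.1)%N -> x i = x' i.
  by move=> i; rewrite -hxx' => /agree ->.
have k1 := Sn_base_key hN1 (h1 _ agree).
have k2 := Sn_base_key hN2 (h2 _ agree').
have hl : nat_of_ord (f (x, o)).2 = nat_of_ord (f (x', o)).2 by rewrite -l1 -l2 hxx'.
suff : f (x, o) = f (x', o) by move/finj => [].
case: k1 => [->//|[[a b]|[a b]]]; case: k2 => [->//|[[c' d]|[c' d]]].
- by move: (lt_trans b d); rewrite ltxx.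
- by rewrite hl c' in a.
- by rewrite hl c' in a.
- by move: (lt_trans b d); rewrite ltxx.
Qed.

Lemma R_unc (R : realType) (h : R -> nat) :
  {in [set r : R | 0 <= r < 1] &, injective h} -> False.
Proof.
move=> hi.
have hc : countable [set` (`[0, 1[ : interval R)].
  apply/countable_injP; exists h => x y hx hy; apply: hi; move: hx hy;
  by rewrite !inE /= in_itv /=.
have := countable_lebesgue_measure0 hc.
rewrite lebesgue_measure_itv /=.
rewrite lte_fin ltr01 oppr0 adde0.
by move/eqP; rewrite onee_eq0.
Qed.

Lemma part2 (R : realType) (n : nat) (o1 : 'I_n) (ho1 : nat_of_ord o1 = 1%N)
  (g : unitI R * 'I_n -> (nat -> bool) * 'I_n) :
  embedding (@Sn_base R n) (Dn_base cantor_base (n:=n)) g -> False.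
Proof.
move=> [ginj gemb].
have lev : forall u : unitI R, sval u < 1 -> nat_of_ord (g (u, o1)).2 = 0%N.
  move=> u hu; apply/eqP; apply/negPn/negP => hne.
  have hop : open_of (Dn_base cantor_base (n:=n)) [set g (u, o1)].
    move=> r ->; exists [set g (u, o1)]; split => //.
    by rewrite /Dn_base (negbTE hne).
  have : open_of (@Sn_base R n) [set (u, o1)].
    apply/gemb; exists [set g (u, o1)]; split => //.
    by apply/seteqP; split => q /=; [move=> -> | move/ginj].
  move=> /(_ (u, o1) erefl) [N [hN Nsub]].
  have hu1 : (sval u == 1) = false by rewrite lt_eqF.
  move: hN; rewrite /Sn_base /= ho1 hu1 /= => -[z [uz hNe]]; subst N.
  have /andP[u0 _] := proj2_sig u.
  have /andP[_ z1] := proj2_sig z.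
  have hz : 0 <= sval u /\ sval z <= 1 by [].
  have [m1 m2] := midf_lt uz.
  have hm : 0 <= (sval u + sval z) / 2 <= 1.
    by rewrite (le_trans _ (ltW m1)) ?(le_trans (ltW m2)); case: hz.
  pose mu : unitI R := exist (fun x : R => (0 <= x <= 1)) _ hm.
  have hin : ([set (u, o1)] `|` [set q | sval u < sval q.1 < sval z]) (mu, o1).
    by right; rewrite /= m1 m2.
  have := Nsub _ hin.
  by move=> [] /(congr1 sval) /= hmu; move: m1; rewrite hmu ltxx.
have hs : forall r : R, exists c : nat * seq bool, forall (hr : 0 <= r <= 1), r < 1 ->
    c.2 = mkseq (g (exist _ r hr, o1)).1 c.1 /\
    forall v : unitI R, sval v < 1 ->
      (forall i, (i < c.1)%N -> (g (v, o1)).1 i = (g (exist _ r hr, o1)).1 i) ->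
      sval v = r \/ r < sval v.
  move=> r.
  case: (pselect (0 <= r <= 1)) => [hr|hr]; last first.
    by exists (0%N, [::]) => hr'; exfalso; apply: hr.
  case: (pselect (r < 1)) => [hr1|hr1]; last first.
    by exists (0%N, [::]) => ? /hr1.
  pose u : unitI R := exist _ r hr.
  pose one : unitI R := exist _ 1 (introT andP (conj (@ler01 R) (lexx (1:R)))).
  pose N := [set (u, o1)] `|` [set q | sval u < sval q.1 < sval one].
  have hN : Sn_base (u, o1) N by apply: L1.
  have [V [hV hNV]] : exists V, open_of (Dn_base cantor_base (n:=n)) V /\ N = g @^-1` V.
    by apply/gemb; exact: Sn_open hN.
  have VgP : V (g (u, o1)).
    have hNu : N (u, o1) by left.
    by move: hNu; rewrite hNV.
  have [M [hM MV]] := hV _ VgP.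
  move: hM; rewrite /Dn_base (lev u hr1) eqxx => -[U [[k hU] hMe]]; subst U M.
  exists (k, mkseq (g (u, o1)).1 k) => hr' _.
  have -> : hr' = hr by apply: bool_irrelevance.
  split => // v hv hag.
  have : N (v, o1).
    rewrite hNV /=; apply: MV => /=; split; first exact: hag.
    by rewrite lev // => -[].
  case=> [[->]|/= /andP[uv _]]; [by left | by right].
have [c hc] := choice hs.
apply: (@R_unc R (fun r => pickle (c r))) => r r'.
rewrite !inE /= => /andP[r0 r1] /andP[r'0 r'1] /(pcan_inj (@pickleK _)) hcc.
have hr : 0 <= r <= 1 by rewrite r0 ltW.
have hr' : 0 <= r' <= 1 by rewrite r'0 ltW.
have [s1 h1] := hc r hr r1.
have [s2 h2] := hc r' hr' r'1.
have agree : forall i, (i < (c r).1)%N ->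
    (g (exist _ r' hr', o1)).1 i = (g (exist _ r hr, o1)).1 i.
  move=> i hi.
  have := congr1 (fun s => nth false s i) (etrans (esym s1) (etrans (congr1 snd hcc) s2)).
  by rewrite /= !nth_mkseq // -hcc.
have agree' : forall i, (i < (c r').1)%N ->
    (g (exist _ r hr, o1)).1 i = (g (exist _ r' hr', o1)).1 i.
  by move=> i; rewrite -hcc => /agree ->.
have := h1 (exist _ r' hr') r'1 agree.
have := h2 (exist _ r hr) r1 agree'.
move=> /= [->//|a] [//|b].
by move: (lt_trans a b); rewrite ltxx.
Qed.

Theorem mainTheorem10 (R : realType) (n : nat) (hn : (2 <= n)%N) :
  ~ (exists f : (nat -> bool) * 'I_n -> unitI R * 'I_n,
       embedding (Dn_base cantor_base (n:=n)) (@Sn_base R n) f) /\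
  ~ (exists g : unitI R * 'I_n -> (nat -> bool) * 'I_n,
       embedding (@Sn_base R n) (Dn_base cantor_base (n:=n)) g).
Proof.
have h0 : (0 < n)%N by apply: leq_trans hn.
have h1 : (1 < n)%N by [].
split.
- by move=> [f hf]; exact: (@part1 R n (Ordinal h0) erefl f hf).
- by move=> [g hg]; exact: (@part2 R n (Ordinal h1) erefl g hg).
Qed.
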